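(* Let $G$ be a finite group with $|G|\equiv 3 \pmod 6$, $G'\cong C_5\times C_5$ and $G'\cap Z(G)=\{1\}$. Then (1) $|\mathrm{Cl}_G(x)|=3$ for all $x\in G'\setminus Z(G)$, and (2) $|G/C_G(G')|=3$.
   Context: $G'$ is the commutator subgroup, $Z(G)$ the center, $C_G(G')$ the centralizer of $G'$ in $G$, $\mathrm{Cl}_G(x)$ the conjugacy class of $x$, $C_5$ the cyclic group of order $5$. *)

(* Defs.v *)
From mathcomp Require Import all_boot all_fingroup all_solvable all_algebra.

(* Main.v *)
Require Import Defs.
From mathcomp Require Import all_boot all_fingroup all_solvable all_algebra.
From mathcomp Require Import zify.
Local Open Scope group_scope.
Lemma nc (gT : finGroupType) (G : {group gT}) (x g : gT) :
  odd #|G| -> #[x] = 5%N -> g \in G -> x ^ g \in <[x]> -> x ^ g = x.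
Proof.
move=> oG ox gG xgX.
have nXg : g \in 'N(<[x]>).
  apply/normP; apply/eqP; rewrite eqEcard cardJg leqnn andbT.
  by rewrite -cycleJ cycle_subG.
have gN : <[g]> \subset 'N(<[x]>) by rewrite cycle_subG.
have d1 : #|conj_aut <[x]> @* <[g]>| %| #|G|.
  apply: dvdn_trans (dvdn_morphim _ _) _.
  by rewrite -orderE order_dvdG.
have d2 : #|conj_aut <[x]> @* <[g]>| %| 4.
  have := cardSg (Aut_conj_aut <[x]> <[g]>).
  by rewrite card_Aut_cycle ox.
have c1 : #|conj_aut <[x]> @* <[g]>| = 1%N.
  have o1 := dvdn_odd d1 oG.
  have : #|conj_aut <[x]> @* <[g]>| <= 4 by apply: dvdn_leq.
  move: o1 d2; case: #|_| => [|[|[|[|[|]]]]] //.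
have : <[g]> \subset 'ker (conj_aut <[x]>).
  by rewrite ker_trivg_morphim gN /= (card1_trivg c1).
move=> h; have := subsetP h g (cycle_id g); rewrite ker_conj_aut.
rewrite cent_cycle => /cent1P.
by move=> hc; rewrite conjgE -hc mulKg.
Qed.

Lemma L1 (gT : finGroupType) (a : gT) : a ^+ 5 = 1 -> a != 1 -> #[a] = 5%N.
Proof.
move=> e n1; have d : #[a] %| 5 by rewrite order_dvdn e.
have := dvdn_leq (isT : 0 < 5) d; move: d; rewrite -order_eq1 in n1; move: n1.
by case: #[a] => [|[|[|[|[|[|]]]]]].
Qed.

Lemma L2 (gT : finGroupType) (a b : gT) : #[a] = 5%N -> b \in <[a]> -> b != 1 ->
  exists2 k : 'I_5, k != ord0 & b = a ^+ k.
Proof.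
move=> oa /cycleP [i ->] n1.
have lt : i %% 5 < 5 by rewrite ltn_pmod.
exists (Ordinal lt); last by rewrite /= -oa expg_mod_order.
apply: contra n1 => /eqP h; move/(congr1 val): h => /= h.
by rewrite -(expg_mod_order a) oa h.
Qed.

Lemma L3 (gT : finGroupType) (a b : gT) : #[a] = 5%N -> #[b] = 5%N ->
  b \in <[a]> -> a \in <[b]>.
Proof.
move=> oa ob ba.
have e : <[b]> = <[a]>.
  apply/eqP; rewrite eqEcard cycle_subG ba -!orderE oa ob leqnn //.
by rewrite e cycle_id.
Qed.

Lemma L4 (gT : finGroupType) (a : gT) (k : 'I_5) : #[a] = 5%N -> k != ord0 ->
  a ^+ k != 1.
Proof.
move=> oa; rewrite -order_dvdn oa.
by case: k => [[|[|[|[|[|]]]]] ?].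
Qed.

Lemma L5 (gT : finGroupType) (H : {group gT}) (z : gT) (k : 'I_5) :
  #[z] = 5%N -> k != ord0 -> z ^+ k \in H -> z \in H.
Proof.
move=> oz; have e : z ^+ k ^+ (k ^ 3) = z ^+ ((k * k ^ 3) %% 5).
  by rewrite -expgM -(expg_mod_order z (k * k ^ 3)) oz.
move: e; case: k => [[|[|[|[|[|]]]]] ?] //= e _ h;
  by rewrite -[z]expg1 -e groupX.
Qed.

Definition K5 : {set 'I_5} := [set~ ord0].
Definition FF (gT : finGroupType) (S : {set gT}) : {set gT} :=
  [set p.1 ^+ (val p.2) | p in setX S K5].
Arguments FF {gT}.

Lemma INJ (gT : finGroupType) (S : {set gT}) :
  {in S, forall y, #[y] = 5%N} ->
  {in S &, forall y z, z \in <[y]> -> z = y} ->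
  #|FF S| = (#|S| * 4)%N.
Proof.
move=> oS PS; rewrite /FF card_in_imset ?cardsX ?cardsC1 ?card_ord //.
move=> [y k] [z j]; rewrite !inE /= => /andP [yS kK] /andP [zS jK] e.
have zy : z = y.
  apply: PS => //; apply: (@L5 _ _ z j (oS z zS) jK); rewrite -e mem_cycle //.
subst z; congr pair; apply/val_inj => /=.
move/eqP: e; rewrite eq_expg_mod_order (oS y yS) !modn_small //.
by move/eqP.
Qed.

Lemma MC (gT : finGroupType) (G V : {group gT}) :
  odd #|G| -> V \subset G -> G \subset 'N(V) -> #|V| = 25%N ->
  {in V, forall v, v ^+ 5 = 1} -> V :&: 'Z(G) = 1 ->
  forall y, y \in V -> y != 1 -> #|y ^: G| = 3%N.
Proof.
move=> oG sVG nVG cV e5 tI.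
have ordV : {in V :\ 1, forall y, #[y] = 5%N}.
  by move=> y /setD1P [n1 yV]; apply: L1 => //; apply: e5.
have clsub : forall y, y \in V :\ 1 -> y ^: G \subset V :\ 1.
  move=> y /setD1P [n1 yV]; apply/subsetP => z /imsetP [g gG ->].
  rewrite !inE conjg_eq1 n1 /= memJ_norm //; exact: (subsetP nVG).
have PP : forall y, y \in V :\ 1 -> {in y ^: G &, forall a b, b \in <[a]> -> b = a}.
  move=> y yV a b aC bC ba.
  have aV : a \in V :\ 1 by apply: (subsetP (clsub y yV)).
  have : b \in a ^: G by rewrite (class_eqP aC).
  case/imsetP => g gG bE; rewrite bE in ba *.
  exact: (nc _ _ _ _ oG (ordV a aV) gG ba).
have mprop : forall y, y \in V :\ 1 -> [/\ odd #|y ^: G|, #|y ^: G| != 1%N & 0 < #|y ^: G|].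
  move=> y /setD1P [n1 yV]; split.
  - by rewrite -index_cent1; apply: dvdn_odd (dvdn_indexg _ _) oG.
  - rewrite -index_cent1 indexg_eq1; apply/negP => sub.
    have : y \in V :&: 'Z(G).
      rewrite inE yV /= inE (subsetP sVG) //= -sub_cent1.
      exact: subset_trans sub (subsetIr _ _).
    by rewrite tI inE (negbTE n1).
  - by apply/card_gt0P; exists y; apply: class_refl.
have m3 : forall y, y \in V :\ 1 -> 3 <= #|y ^: G|.
  move=> y /mprop [].
  by case: #|_| => [|[|[|]]].
have Fsub : forall S : {set gT}, S \subset V :\ 1 -> FF S \subset V :\ 1.
  move=> S sS; apply/subsetP => z /imsetP [[a k]]; rewrite !inE /= => /andP [aS kK] ->.
  have aV := subsetP sS a aS; move: (aV); rewrite inE => /andP [_ aV'].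
  by rewrite groupX // andbT; apply: L4 => //; apply: ordV.
have c24 : #|V :\ 1| = 24%N by move: (cardsD1 1 V); rewrite group1 cV add1n => -[->].
have bound : forall S : {set gT}, S \subset V :\ 1 ->
    {in S &, forall a b, b \in <[a]> -> b = a} -> (#|S| * 4 <= 24)%N.
  move=> S sS PS; rewrite -INJ; last by [].
    by rewrite -c24 subset_leq_card // Fsub.
  by move=> a aS; apply: ordV; apply: (subsetP sS).
move=> y yV n1; have y1 : y \in V :\ 1 by rewrite !inE n1.
have b1 := bound _ (clsub y y1) (PP y y1).
have [od ne1 _] := mprop y y1.
have my3 := m3 y y1.
have : (#|y ^: G| == 3) || (#|y ^: G| == 5).
  move: od ne1 my3 b1; case: #|_| => [|[|[|[|[|[|[|]]]]]]] //.
case/orP => [/eqP //|/eqP m5]; exfalso.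
have : ~~ (V :\ 1 \subset FF (y ^: G)).
  apply/negP => sub; have := subset_leq_card sub.
  by rewrite INJ ?m5 ?c24 // => [a aC|]; [apply: ordV; apply: (subsetP (clsub y y1)) | apply: PP].
case/subsetPn => w w1 wF.
have mix : forall a b, a \in y ^: G -> b \in w ^: G -> b \in <[a]> -> False.
  move=> a b aC bC ba.
  have aV : a \in V :\ 1 := subsetP (clsub y y1) a aC.
  have bV : b \in V :\ 1 := subsetP (clsub w w1) b bC.
  have bn1 : b != 1 by move: bV; rewrite !inE => /andP [].
  have [k k0 bE] := @L2 _ a b (ordV a aV) ba bn1.
  have : w \in b ^: G by rewrite (class_eqP bC) class_refl.
  case/imsetP => h hG wE.
  move/negP: wF; apply; apply/imsetP; exists (a ^ h, k).
    by rewrite !inE /= k0 andbT -(class_eqP aC) memJ_class.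
  by rewrite wE bE /= conjXg.
have w1' : w \in w ^: G by apply: class_refl.
have dis : y ^: G :&: w ^: G = set0.
  apply/setP => z; rewrite !inE; apply/negP => /andP [zy zw].
  move/negP: wF; apply; apply/imsetP; exists (w, Ordinal (isT : 1 < 5)).
    by rewrite !inE /= andbT -(class_eqP zy) (class_eqP zw) class_refl.
  by rewrite /= expg1.
have PS : {in y ^: G :|: w ^: G &, forall a b, b \in <[a]> -> b = a}.
  move=> a b /setUP [aC|aC] /setUP [bC|bC] ba.
  - exact: (PP y y1).
  - by case: (mix a b aC bC ba).
  - have aV : a \in V :\ 1 := subsetP (clsub w w1) a aC.
    have bV : b \in V :\ 1 := subsetP (clsub y y1) b bC.
    by case: (mix b a bC aC (L3 _ _ _ (ordV a aV) (ordV b bV) ba)).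
  - exact: (PP w w1).
have := bound _ _ PS.
have := m3 w w1.
rewrite cardsU dis cards0 subn0 m5.
have -> : y ^: G :|: w ^: G \subset V :\ 1 by rewrite subUset !clsub.
move=> h3 h4; have := h4 isT; rewrite mulnDl; move: h3; case: #|w ^: G| => [|[|[|n]]] // _; rewrite !mulSn; lia.
Qed.

Lemma z5 (a : ('Z_5 * 'Z_5)%type) : a ^+ 5 = 1.
Proof. case: a => a b; apply/eqP; rewrite /eq_op /=.
by case: a => [[|[|[|[|[|//]]]]] ?]; case: b => [[|[|[|[|[|//]]]]] ?]. Qed.

Theorem lemma4p2 (gT : finGroupType) (G : {group gT}) :
  #|G| = 3 %[mod 6] ->
  G^`(1) \isog [set: 'Z_5 * 'Z_5] ->
  G^`(1) :&: 'Z(G) = 1 ->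
  (forall x, x \in G^`(1) :\: 'Z(G) -> #|x ^: G| = 3%N) /\
  #|G / 'C_G(G^`(1))| = 3%N.
Proof.
move=> m6 iso tI.
have oG : odd #|G|.
  have : #|G| %% 2 = 1%N by move: m6 => /= m6; lia.
  by rewrite modn2 => /eqP; rewrite eqb1.
have /andP [sVG nVG] := der_normal 1 G.
have cV : #|G^`(1)| = 25%N.
  by rewrite (card_isog iso) cardsT card_prod !card_ord.
have e5 : {in G^`(1), forall v, v ^+ 5 = 1}.
  move=> v vV; case/isogP: iso => f injf _.
  apply/eqP; rewrite -(morph_injm_eq1 injf) ?groupX // morphX //.
  by rewrite z5.
have MC' := MC _ _ _ oG sVG nVG cV e5 tI.
split.
  move=> x /setDP [xV xZ]; apply: MC' => //.
  by apply: contra xZ => /eqP ->; apply: group1.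
set V := G^`(1).
have abV : abelian V by apply: (card_p2group_abelian (p := 5)).
have [x xV xn1] : exists2 x, x \in V & x != 1.
  apply/trivgPn; apply/eqP => V1; move: cV; rewrite /V V1 cards1.
  done.
have ox : #[x] = 5%N by apply: L1 => //; apply: e5.
have mx := MC' x xV xn1.
have sVC : V \subset 'C_G[x].
  by rewrite subsetI sVG sub_cent1 (subsetP abV).
have nC : 'C_G[x] <| G by apply: sub_der1_normal => //; apply: subsetIl.
have [y yC yx] : exists2 y, y \in x ^: G & y != x.
  have : ~~ (x ^: G \subset [set x]).
    apply/negP => sub; have := subset_leq_card sub; rewrite cards1 mx.
    done.
  by case/subsetPn => y yC; rewrite inE => yx; exists y.
case/imsetP: yC => g gG yE.
have ynX : y \notin <[x]>.
  by apply: contra yx; rewrite yE => /(nc _ _ _ _ oG ox gG) ->.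
have yV : y \in V by rewrite yE memJ_norm // (subsetP nVG).
have oy : #[y] = 5%N.
  apply: L1; first by apply: e5.
  by rewrite yE conjg_eq1.
have Cy : 'C_G[y] = 'C_G[x].
  by rewrite yE cent1J -{1}(conjGid gG) -conjIg (normsP (normal_norm nC)).
have TI : <[x]> :&: <[y]> = 1.
  apply/trivgP; apply/subsetP => z /setIP [zx zy]; rewrite inE.
  apply/negPn/negP => z1.
  have [k k0 zE] := @L2 _ x z ox zx z1.
  rewrite zE in zy; have xy := @L5 _ _ x k ox k0 zy.
  by move/negP: ynX; apply; apply: L3.
have XY : <[x]> * <[y]> = V.
  apply/eqP; rewrite eqEcard mul_subG ?cycle_subG //= TI_cardMg // -!orderE ox oy cV leqnn.
  done.
have CE : 'C_G(V) = 'C_G[x].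
  apply/eqP; rewrite eqEsubset; apply/andP; split.
    apply: setIS; apply/subsetP => h hC; apply/cent1P; exact: (centP hC x xV).
  rewrite -XY centM -!cent_cycle subsetI subsetIl /=.
  rewrite subsetI (subset_trans (subsetIr _ _) _) //=.
  by rewrite !cent_cycle -Cy subsetIr.
rewrite CE card_quotient ?normal_norm // index_cent1 //.
Qed.
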